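(* Let $(\Sigma,\mathscr{P})$ be a Kelvin-Planck theory with a Clausius-Duhem pair $(\eta^\circ,T^\circ)$, and let $(\mathscr{v},\mathscr{w})\in\mathscr{V}(\Sigma)$ satisfy $\int_\Sigma\eta^\circ\,d\mathscr{v}-\int_\Sigma\frac{d\mathscr{w}}{T^\circ}=0$. If $(\mathscr{v},\mathscr{w})\notin\hat{\mathscr{P}}$, then there is another Clausius-Duhem pair $(\eta,T)$ such that $\int_\Sigma\eta\,d\mathscr{v}-\int_\Sigma\frac{d\mathscr{w}}{T}<0$.
   Context: $\Sigma$ is a compact Hausdorff space. $\mathscr{M}(\Sigma)$ is the vector space of regular signed Borel measures on $\Sigma$ with its weak-star topology; $\mathscr{M}_+(\Sigma)$ the nonnegative members; $\mathscr{M}^\circ(\Sigma)=\{\mu:\mu(\Sigma)=0\}$; $\mathscr{V}(\Sigma)=\mathscr{M}^\circ(\Sigma)\oplus\mathscr{M}(\Sigma)$ with the product topology. For $\mathscr{P}\subset\mathscr{V}(\Sigma)$, $\hat{\mathscr{P}}$ is the closure of the set of nonnegative multiples of members of $\mathscr{P}$. A thermodynamical theory is $(\Sigma,\mathscr{P})$ with $\hat{\mathscr{P}}$ convex; it is Kelvin-Planck if $\hat{\mathscr{P}}\cap\{(0,\nu):\nu\in\mathscr{M}_+(\Sigma)\}=\{(0,0)\}$. A Clausius-Duhem pair is $(\eta,T)$, $\eta\in C(\Sigma,\mathbb{R})$, $T\in C(\Sigma,(0,\infty))$, with $\int_\Sigma\eta\,d(\Delta\mathscr{m})\ge\int_\Sigma\frac{d\mathscr{q}}{T}$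 for all $(\Delta\mathscr{m},\mathscr{q})\in\mathscr{P}$. *)

(* Defs.v *)
From HB Require Import structures.
From mathcomp Require Import all_boot all_order all_algebra.
From mathcomp Require Import all_classical all_reals all_analysis.
Set Implicit Arguments. Unset Strict Implicit. Unset Printing Implicit Defensive.
Import Order.TTheory GRing.Theory Num.Theory numFieldTopology.Exports.
Local Open Scope classical_set_scope.
Local Open Scope ring_scope.

Definition Borel (S : ptopologicalType) := g_sigma_algebraType (@open S).

Section Thermo.
Context (R : realType) (S : ptopologicalType).

Definition sgmeasure := {charge set (Borel S) -> \bar R}.

Definition hahn_pn (nu : sgmeasure) :
  {PN : set (Borel S) * set (Borel S) | hahn_decomposition nu PN.1 PN.2}.
Proof.
have /cid [P /cid [N HPN]] := Hahn_decomposition nu.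
by exists (P, N).
Defined.

Definition variation (nu : sgmeasure) : set (Borel S) -> \bar R :=
  charge_variation (proj2_sig (hahn_pn nu)).

Definition sint (nu : sgmeasure) (f : S -> R) : R :=
  fine (\int[jordan_pos (proj2_sig (hahn_pn nu))]_x (f x)%:E) -
  fine (\int[jordan_neg (proj2_sig (hahn_pn nu))]_x (f x)%:E).

Definition regular_measure (mu : set (Borel S) -> \bar R) : Prop :=
  forall E : set (Borel S), measurable E ->
    mu E = ereal_inf [set mu U | U in [set U : set S | open U /\ E `<=` U]] /\
    mu E = ereal_sup [set mu K | K in [set K : set S | compact K /\ K `<=` E]].

Definition inM (nu : sgmeasure) : Prop := regular_measure (variation nu).

Definition nonneg_measure (nu : sgmeasure) : Prop :=
  forall A : set (Borel S), measurable A -> (0 <= nu A)%E.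

Definition inV (v w : sgmeasure) : Prop :=
  [/\ inM v, inM w & v [set: Borel S] = 0%E].

(* hat P : the closure, in V(S) with the product of the weak-star topologies,
   of the set of nonnegative multiples of members of P.  Membership is
   written through the basic weak-star neighbourhoods (finitely many
   continuous test functions and a radius eps); note that
   int f d(t mu) = t * int f dmu. *)
Definition hatP (P : set (sgmeasure * sgmeasure)) (v w : sgmeasure) : Prop :=
  inV v w /\
  forall (n : nat) (f g : nat -> S -> R),
    (forall i, continuous (f i)) -> (forall i, continuous (g i)) ->
    forall eps : R, 0 < eps ->
    exists t : R, 0 <= t /\ exists p, P p /\
      forall i, (i < n)%N ->
        `|t * sint p.1 (f i) - sint v (f i)| < eps /\
        `|t * sint p.2 (g i) - sint w (g i)| < eps.

Definition zero_measure : sgmeasure := @czero _ (Borel S) R.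

Definition thermo_theory (P : set (sgmeasure * sgmeasure)) : Prop :=
  (forall p, P p -> inV p.1 p.2) /\
  forall (v1 w1 v2 w2 : sgmeasure) (l : R), 0 <= l <= 1 ->
    hatP P v1 w1 -> hatP P v2 w2 ->
    hatP P (cadd (cscale l v1) (cscale (1 - l) v2))
           (cadd (cscale l w1) (cscale (1 - l) w2)).

Definition kelvin_planck (P : set (sgmeasure * sgmeasure)) : Prop :=
  hatP P zero_measure zero_measure /\
  forall nu : sgmeasure, inM nu -> nonneg_measure nu ->
    hatP P zero_measure nu ->
    forall A : set (Borel S), measurable A -> nu A = 0%E.

Definition CD_pair (P : set (sgmeasure * sgmeasure)) (eta T : S -> R) : Prop :=
  [/\ continuous eta, continuous T, (forall x, 0 < T x) &
      forall dm q, P (dm, q) -> sint q (fun x => (T x)^-1) <= sint dm eta].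

End Thermo.

(* Main.v *)
Require Import Defs.
From HB Require Import structures.
From mathcomp Require Import all_boot all_order all_algebra.
From mathcomp Require Import all_classical all_reals all_analysis.
From mathcomp Require Import ring lra measurable_realfun.
Import Order.TTheory GRing.Theory Num.Theory numFieldTopology.Exports.
Local Open Scope classical_set_scope.
Local Open Scope ring_scope.
Section Sep.
Context {R : realType}.

Lemma cont_sum (T : topologicalType) (I : Type) (r : seq I) (F : I -> T -> R) :
  (forall i, continuous (F i)) -> continuous (fun x => \sum_(i <- r) F i x).
Proof.
move=> cF; elim: r => [|i r IH].
  under eq_fun do rewrite big_nil.
  exact: cst_continuous.
under eq_fun do rewrite big_cons.
move=> x; apply: cvgD; [exact: cF | exact: IH].
Qed.

Lemma closure_sub_closed (T : topologicalType) (A C : set T) :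
  closed C -> A `<=` C -> closure A `<=` C.
Proof.
move=> cC AC x /(closureS AC).
by rewrite -(closure_id C).1.
Qed.

Variable m : nat.
Local Notation V := 'rV[R]_m.

Definition sqd (z y : V) : R := \sum_k (y ord0 k - z ord0 k) ^+ 2.
Definition dotv (a y : V) : R := \sum_k a ord0 k * y ord0 k.

Lemma sqd_cont (z : V) : continuous (sqd z).
Proof.
rewrite /sqd; apply: cont_sum => k.
have -> : (fun y : V => (y ord0 k - z ord0 k) ^+ 2) =
   (fun y => (y ord0 k - z ord0 k)) \* (fun y => (y ord0 k - z ord0 k)).
  by apply/funext => y /=; rewrite expr2.
have hc : continuous (fun y : V => y ord0 k - z ord0 k).
  move=> y; have h1 := @coord_continuous R 1 m ord0 k y.
  apply: continuousB => //; exact: cst_continuous.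
move=> y; exact: (@continuousM R _ (fun y : V => y ord0 k - z ord0 k) (fun y : V => y ord0 k - z ord0 k) y (hc y) (hc y)).
Qed.

Lemma sqd_ge0 (z y : V) : 0 <= sqd z y.
Proof. by apply: sumr_ge0 => k _; exact: sqr_ge0. Qed.

Lemma sqd_term (z y : V) (k : 'I_m) : (y ord0 k - z ord0 k) ^+ 2 <= sqd z y.
Proof.
rewrite /sqd (bigD1 k) //= lerDl; apply: sumr_ge0 => i _; exact: sqr_ge0.
Qed.

Lemma sq_bound (x C : R) : 0 <= C -> x ^+ 2 <= C -> `|x| <= 1 + C.
Proof.
move=> C0 xC; rewrite ler_norml; apply/andP; split; nra.
Qed.

Lemma var_ineq (D U : R) : 0 <= U ->
  (forall t, 0 < t <= 1 -> 0 <= 2 * t * D + t ^+ 2 * U) -> 0 <= D.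
Proof.
move=> U0 H; rewrite leNgt; apply/negP => D0.
have UD : 0 < U - D by lra.
pose t := - D / (U - D).
have t0 : 0 < t by rewrite /t divr_gt0 // oppr_gt0.
have t1 : t <= 1 by rewrite /t ler_pdivrMr // mul1r; lra.
have := H t (ltac:(by apply/andP)).
have -> : 2 * t * D + t ^+ 2 * U = t * (2 * D + t * U) by rewrite expr2; ring.
rewrite pmulr_rge0 //.
have : t * U <= - D.
  rewrite /t mulrAC ler_pdivrMr //; nra.
lra.
Qed.

End Sep.
Arguments sqd {R m}. Arguments dotv {R m}.
Arguments sqd_term {R m}. Arguments sqd_ge0 {R m}. Arguments sqd_cont {R m}.
Section Sep2.
Context {R : realType}.
Variable m : nat.
Local Notation V := 'rV[R]_m.

Lemma separation (H : set V) (z : V) (c : R) :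
  H 0 -> (forall y t, H y -> 0 <= t -> H (t *: y)) ->
  (forall y1 y2 l, H y1 -> H y2 -> 0 <= l <= 1 -> H (l *: y1 + (1 - l) *: y2)) ->
  0 < c -> (forall y, H y -> c <= sqd z y) ->
  exists a : V, (forall y, H y -> 0 <= dotv a y) /\ dotv a z < 0.
Proof.
move=> H0 Hcone Hconv c0 Hgap.
pose C := sqd z 0.
have C0 : 0 <= C by exact: sqd_ge0.
pose K := closure H `&` [set y | sqd z y <= C].
have K0 : K 0 by split; [exact: subset_closure | rewrite /= lexx].
have cK : compact K.
  apply: bounded_closed_compact.
    rewrite /= /bounded_near; near=> M => y [_ /= Ky].
    rewrite [leLHS]/Num.norm /= mx_normrE; apply: bigmax_le.
      by near: M; apply: nbhs_pinfty_ge; rewrite num_real.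
    move=> [i k] _ /=; have -> : i = ord0 by apply/val_inj => /=; case: i => [[|n]] //.
    have h1 : `|y ord0 k - z ord0 k| <= 1 + C.
      by apply: sq_bound => //; apply: le_trans (sqd_term z y k) Ky.
    have h2 : `|z ord0 k| <= 1 + C.
      apply: sq_bound => //; apply: le_trans (sqd_term z 0 k); rewrite mxE.
      by rewrite sub0r sqrrN.
    have h3 : `|y ord0 k| <= 2 + 2 * C.
      have -> : y ord0 k = (y ord0 k - z ord0 k) + z ord0 k by rewrite subrK.
      apply: le_trans (ler_normD _ _) _; lra.
    apply: le_trans h3 _.
    by near: M; apply: nbhs_pinfty_ge; rewrite num_real.
  apply: closedI; first exact: closed_closure.
  apply: (@preimage_closed _ _ (sqd z) [set x | x <= C]).
    by move=> y _; exact: sqd_cont.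
  exact: closed_le.
have [hs /set_mem hsK hsmin] := compact_EVT_min (ex_intro _ 0 K0) cK
  (continuous_subspaceT (sqd_cont z)).
have minH : forall y, H y -> sqd z hs <= sqd z y.
  move=> y Hy; have [yC|Cy] := leP (sqd z y) C.
    by apply: hsmin; apply/mem_set; split => //; exact: subset_closure.
  apply: le_trans (ltW Cy); by apply: hsmin; apply/mem_set.
have clH : closure H hs by case: hsK.
have gap : c <= sqd z hs.
  apply: (@closure_sub_closed _ H [set y | c <= sqd z y] _ _ hs clH); last exact: Hgap.
  apply: (@preimage_closed _ _ (sqd z) [set x | c <= x]).
    by move=> y _; exact: sqd_cont.
  exact: closed_ge.
have var : forall h t, H h -> 0 < t <= 1 -> sqd z hs <= sqd z (t *: h + (1 - t) *: hs).
  move=> h t Hh /andP[t0 t1].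
  apply: (@closure_sub_closed _ H [set y | sqd z hs <= sqd z (t *: h + (1 - t) *: y)] _ _ hs clH).
    have hcl : closed ((fun y => sqd z (t *: h + (1 - t) *: y)) @^-1` [set x | sqd z hs <= x]).
      apply: preimage_closed; last exact: closed_ge.
      move=> y _; apply: continuous_comp; last exact: sqd_cont.
      apply: continuousD; first exact: cst_continuous.
      apply: (@continuousZl_tmp _ _ _ (fun y : V => y)); exact: cvg_id.
    exact: hcl.
  move=> y Hy /=; apply: minH; apply: Hconv => //; lra.
pose a : V := hs - z.
have ineqH : forall h, H h -> dotv a hs <= dotv a h.
  move=> h Hh.
  have := @var_ineq R (dotv a h - dotv a hs) (sqd hs h) (sqd_ge0 _ _).
  rewrite subr_ge0; apply => t /andP[t0 t1].
  have := var h t Hh (ltac:(by apply/andP)).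
  have -> : sqd z (t *: h + (1 - t) *: hs) =
     sqd z hs + (2 * t * (dotv a h - dotv a hs) + t ^+ 2 * sqd hs h).
    rewrite /sqd /dotv -sumrB mulr_sumr mulr_sumr -big_split -big_split /=.
    apply: eq_bigr => k _; rewrite !mxE; ring.
  by rewrite lerDl.
have ahs : dotv a hs <= 0.
  have h0 : dotv a 0 = 0.
  by rewrite /dotv big1 // => k _; rewrite [X in _ * X]mxE mulr0.
  by have := ineqH 0 H0; rewrite h0.
exists a; split.
  move=> y Hy; rewrite leNgt; apply/negP => ay.
  pose s := (dotv a hs - 1) / dotv a y.
  have s0 : 0 <= s by rewrite /s ler_ndivlMr // mul0r; lra.
  have := ineqH _ (Hcone y s Hy s0).
  have -> : dotv a (s *: y) = s * dotv a y.
    by rewrite /dotv mulr_sumr; apply: eq_bigr => k _; rewrite [(s *: y) ord0 k]mxE; ring.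
  rewrite /s divfK; first lra.
  by rewrite lt_eqF.
have -> : dotv a z = dotv a hs - sqd z hs.
  rewrite /dotv /sqd -sumrB; apply: eq_bigr => k _; rewrite !mxE; ring.
lra.
Unshelve. all: by end_near.
Qed.
End Sep2.
Section Meas.
Context {R : realType} {S : ptopologicalType}.
Local Notation T := (Borel S).

Lemma cont_meas {f : S -> R} : continuous f -> measurable_fun [set: T] f.
Proof.
move=> cf; apply: (measurability _ (RGenOpens.measurableE R)).
move=> _ [_ [a [b ->] <-]].
apply: measurableI => //.
apply: sub_sigma_algebra.
by move/continuousP: cf; apply; exact: interval_open.
Qed.

Hypothesis cS : compact [set: S].

Lemma cont_bdd {f : S -> R} : continuous f -> exists M, forall x, `|f x| <= M.
Proof.
move=> cf.
have cnf : continuous (fun x => `|f x|).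
  move=> x; apply: (continuous_comp (cf x)); exact: norm_continuous.
have [c _ Hc] := compact_EVT_max (ex_intro _ point I) cS (continuous_subspaceT cnf).
by exists `|f c| => x; apply: Hc; exact: in_setT.
Qed.

Lemma cont_bounded {f : S -> R} : continuous f -> [bounded f x | x in [set: T]].
Proof.
move=> /cont_bdd [M HM]; rewrite /bounded_near.
near=> N => x _ /=; apply: le_trans (HM x) _.
near: N; apply: nbhs_pinfty_ge; rewrite num_real.
Unshelve. all: by end_near.
Qed.

Lemma cont_int (mu : {finite_measure set T -> \bar R}) {f : S -> R} :
  continuous f -> mu.-integrable [set: T] (EFin \o f).
Proof.
move=> cf; apply: measurable_bounded_integrable => //.
- apply: fin_num_fun_lty; exact: fin_num_measure.
- exact: cont_meas.
- exact: cont_bounded.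
Qed.

Definition J (mu : {measure set T -> \bar R}) (f : S -> R) : R :=
  fine (\int[mu]_x (f x)%:E).

Lemma J_fin (mu : {finite_measure set T -> \bar R}) {f : S -> R} :
  continuous f -> (\int[mu]_x (f x)%:E = (J mu f)%:E)%E.
Proof. by move=> cf; rewrite /J fineK //; apply: integrable_fin_num => //; exact: (cont_int mu cf). Qed.

Lemma J_add (mu : {finite_measure set T -> \bar R}) (f g : S -> R) :
  continuous f -> continuous g -> J mu (fun x => f x + g x) = J mu f + J mu g.
Proof.
move=> cf cg; rewrite {1}/J.
under eq_integral do rewrite EFinD.
rewrite integralD //; [|exact: (cont_int mu cf)|exact: (cont_int mu cg)].
by rewrite (J_fin _ cf) (J_fin _ cg).
Qed.

Lemma J_scale (mu : {finite_measure set T -> \bar R}) (c : R) (f : S -> R) :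
  continuous f -> J mu (fun x => c * f x) = c * J mu f.
Proof.
move=> cf; rewrite {1}/J.
under eq_integral do rewrite EFinM.
rewrite integralZl //; last exact: (cont_int mu cf).
by rewrite (J_fin _ cf).
Qed.


Lemma J_comb_ge0 (p n p1 n1 p2 n2 : {finite_measure set T -> \bar R}) (l : R)
  (l0 : 0 <= l) (l1 : l <= 1) (g : S -> R) :
  (forall A, measurable A ->
     (p A + (l%:E * n1 A + (1-l)%:E * n2 A) = n A + (l%:E * p1 A + (1-l)%:E * p2 A))%E) ->
  continuous g -> (forall x, 0 <= g x) ->
  J p g + (l * J n1 g + (1-l) * J n2 g) = J n g + (l * J p1 g + (1-l) * J p2 g).
Proof.
move=> Hm cg g0.
have l1' : 0 <= 1 - l by lra.
pose L := NngNum l0; pose L' := NngNum l1'.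
pose M1 := measure_add p (measure_add (mscale L n1) (mscale L' n2)).
pose M2 := measure_add n (measure_add (mscale L p1) (mscale L' p2)).
have E : (\int[M1]_x (g x)%:E = \int[M2]_x (g x)%:E)%E.
  apply: eq_measure_integral => A mA _.
  rewrite /M1 /M2 /= /msum /= !big_ord_recl !big_ord0 /= /msum /= !big_ord_recl !big_ord0 /= !adde0; exact: Hm.
have mg : measurable_fun [set: T] (fun x : T => (g x)%:E).
  by apply/measurable_EFinP; exact: cont_meas.
have g0' : forall x, [set: T] x -> (0 <= (g x)%:E)%E by move=> x _; rewrite lee_fin.
have iadd : forall (m1 m2 : {measure set T -> \bar R}),
    (\int[measure_add m1 m2]_x (g x)%:E = \int[m1]_x (g x)%:E + \int[m2]_x (g x)%:E)%E.
  by move=> m1 m2; apply: ge0_integral_measure_add.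
have iscale : forall (k : {nonneg R}) (m : {measure set T -> \bar R}),
    (\int[mscale k m]_x (g x)%:E = k%:num%:E * \int[m]_x (g x)%:E)%E.
  by move=> k m; apply: ge0_integral_mscale.
move: E; rewrite /M1 /M2 !iadd !iscale /= !(J_fin _ cg) -!EFinM -!EFinD.
by case.
Qed.

Lemma J_comb (p n p1 n1 p2 n2 : {finite_measure set T -> \bar R}) (l : R)
  (l0 : 0 <= l) (l1 : l <= 1) (f : S -> R) :
  (forall A, measurable A ->
     (p A + (l%:E * n1 A + (1-l)%:E * n2 A) = n A + (l%:E * p1 A + (1-l)%:E * p2 A))%E) ->
  continuous f ->
  J p f - J n f = l * (J p1 f - J n1 f) + (1-l) * (J p2 f - J n2 f).
Proof.
move=> Hm cf.
have [M HM] := cont_bdd cf.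
have cM : continuous (fun _ : S => M) by move=> x; exact: cst_continuous.
have cg : continuous (fun x => f x + M).
  by move=> x; apply: continuousD; [exact: cf | exact: cM].
have g0 : forall x, 0 <= f x + M.
  by move=> x; have := HM x; rewrite ler_norml => /andP[h _]; lra.
have H1 := @J_comb_ge0 p n p1 n1 p2 n2 l l0 l1 _ Hm cg g0.
have H2 := @J_comb_ge0 p n p1 n1 p2 n2 l l0 l1 _ Hm cM (fun x => le_trans (normr_ge0 _) (HM x)).
have e : forall mu : {finite_measure set T -> \bar R},
  J mu (fun x => f x + M) = J mu f + J mu (fun _ => M).
  by move=> mu; apply: J_add.
rewrite !e in H1.
rewrite !mulrDr in H1; rewrite !mulrBr.
lra.
Qed.


Lemma ebar_comb (l : R) (v1A v2A pA nA p1A n1A p2A n2A : \bar R) :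
  v1A \is a fin_num -> v2A \is a fin_num -> pA \is a fin_num -> nA \is a fin_num ->
  p1A \is a fin_num -> n1A \is a fin_num -> p2A \is a fin_num -> n2A \is a fin_num ->
  (l%:E * v1A + (1-l)%:E * v2A = pA + (-1)%:E * nA)%E ->
  (v1A = p1A + (-1)%:E * n1A)%E -> (v2A = p2A + (-1)%:E * n2A)%E ->
  (pA + (l%:E * n1A + (1-l)%:E * n2A) = nA + (l%:E * p1A + (1-l)%:E * p2A))%E.
Proof.
move: v1A v2A pA nA p1A n1A p2A n2A.
move=> [a| |] // [b| |] // [c| |] // [e| |] // [g| |] // [h| |] // [i| |] // [j| |] // _ _ _ _ _ _ _ _.
rewrite -!EFinM -!EFinD => -[h0] [h1] [h2]; congr EFin.
rewrite h1 h2 in h0; nra.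
Qed.

Lemma sint_J (nu : sgmeasure R S) (f : S -> R) :
  sint nu f = J (jordan_pos (proj2_sig (hahn_pn nu))) f - J (jordan_neg (proj2_sig (hahn_pn nu))) f.
Proof. by []. Qed.

Lemma sint_add (nu : sgmeasure R S) (f g : S -> R) :
  continuous f -> continuous g -> sint nu (fun x => f x + g x) = sint nu f + sint nu g.
Proof. by move=> cf cg; rewrite !sint_J !J_add //; ring. Qed.

Lemma sint_scale (nu : sgmeasure R S) (c : R) (f : S -> R) :
  continuous f -> sint nu (fun x => c * f x) = c * sint nu f.
Proof. by move=> cf; rewrite !sint_J !J_scale //; ring. Qed.

Lemma sint_comb (v1 v2 : sgmeasure R S) (l : R) (f : S -> R) :
  0 <= l <= 1 -> continuous f ->
  sint (cadd (cscale l v1) (cscale (1 - l) v2)) f = l * sint v1 f + (1 - l) * sint v2 f.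
Proof.
move=> /andP[l0 l1] cf; rewrite !sint_J; apply: J_comb => // A mA.
have e0 := jordan_decomp (proj2_sig (hahn_pn (cadd (cscale l v1) (cscale (1 - l) v2)))) mA.
have e1 := jordan_decomp (proj2_sig (hahn_pn v1)) mA.
have e2 := jordan_decomp (proj2_sig (hahn_pn v2)) mA.
move: e0 e1 e2; rewrite /cadd /cscale /=.
apply: ebar_comb; exact: fin_num_measure.
Qed.

End Meas.

Lemma sq_ge (R : realType) (x e : R) : 0 <= e -> e <= `|x| -> e ^+ 2 <= x ^+ 2.
Proof.
move=> e0; have [hx|hx] := ler0P x; move=> h; nra.
Qed.

Lemma sint0 (R : realType) (S : ptopologicalType) (cS : compact [set: S]) (nu : sgmeasure R S) :
  sint nu (fun _ => 0) = 0.
Proof.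
have cz : continuous (fun _ : S => (0:R)) by move=> x; exact: cst_continuous.
have h := sint_scale cS nu 0 _ cz.
have e : (fun _ : S => (0:R)) = (fun x => 0 * 0) by apply/funext => x; rewrite mul0r.
by rewrite [in LHS]e h mul0r.
Qed.

Lemma sint_sum (R : realType) (S : ptopologicalType) (cS : compact [set: S]) (nu : sgmeasure R S)
  (I : Type) (r : seq I) (c : I -> R) (h : I -> S -> R) :
  (forall i, continuous (h i)) ->
  sint nu (fun x => \sum_(k <- r) c k * h k x) = \sum_(k <- r) c k * sint nu (h k).
Proof.
move=> ch; elim: r => [|i r IH].
  rewrite big_nil; under eq_fun do rewrite big_nil; exact: sint0.
rewrite big_cons; under eq_fun do rewrite big_cons.
rewrite sint_add //.
- by rewrite sint_scale // IH.
- by move=> x; apply: continuousM; [exact: cst_continuous | exact: ch].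
- by apply: cont_sum => k x; apply: continuousM; [exact: cst_continuous | exact: ch].
Qed.


Lemma gap_aux (R : realType) (s t A Q V eps : R) : 0 < s ->
  `|t * A - Q| < eps / (2 * s) -> eps <= `|s * t * A - V| -> eps / 2 <= `|s * Q - V|.
Proof.
move=> s0 h1 h2.
have e : `|s * t * A - s * Q| = s * `|t * A - Q|.
  by rewrite -mulrA -mulrBr normrM gtr0_norm.
have h3 : s * `|t * A - Q| < eps / 2.
  move: h1; rewrite ltr_pdivlMr ?mulr_gt0 // => h1.
  rewrite ltr_pdivlMr //; nra.
have h4 : `|s * t * A - V| <= `|s * t * A - s * Q| + `|s * Q - V|.
  have -> : s * t * A - V = (s * t * A - s * Q) + (s * Q - V) by ring.
  exact: ler_normD.
lra.
Qed.

Theorem lemma3p2 (R : realType) (S : ptopologicalType)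
  (hS : hausdorff_space S) (cS : compact [set: S])
  (P : set (sgmeasure R S * sgmeasure R S))
  (P_nonempty : P !=set0)
  (thP : thermo_theory P) (kpP : kelvin_planck P)
  (eta0 T0 : S -> R) (cd0 : CD_pair P eta0 T0)
  (v w : sgmeasure R S) (vwV : inV v w)
  (heq : sint v eta0 - sint w (fun x => (T0 x)^-1) = 0)
  (notin : ~ hatP P v w) :
  exists eta T : S -> R, CD_pair P eta T /\
    sint v eta - sint w (fun x => (T x)^-1) < 0.
Proof.
have [n [f [g [cf [cg [eps [eps0 Hfar]]]]]]] : exists n (f g : nat -> S -> R),
    (forall i, continuous (f i)) /\ (forall i, continuous (g i)) /\
    exists eps : R, 0 < eps /\ forall t : R, 0 <= t -> forall p, P p ->
      exists2 i, (i < n)%N & ~ (`|t * sint p.1 (f i) - sint v (f i)| < eps /\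
                                `|t * sint p.2 (g i) - sint w (g i)| < eps).
  apply: contrapT => H; apply: notin; split => // n f g cf cg eps eps0.
  apply: contrapT => H2; apply: H; exists n, f, g; split => //; split => //.
  exists eps; split => // t t0 p Pp; apply: contrapT => H3; apply: H2.
  exists t; split => //; exists p; split => // i ilt; apply: contrapT => H4; apply: H3.
  by exists i.
case: cd0 => ceta0 cT0 T0pos cdP.
pose f' (k : nat) : S -> R := if (k < n)%N then f k else (fun _ => 0).
pose g' (k : nat) : S -> R := if (k < n)%N then (fun _ => 0) else g (k - n)%N.
have cf' : forall k, continuous (f' k).
  by move=> k; rewrite /f'; case: ifP => _ //; move=> x; exact: cst_continuous.
have cg' : forall k, continuous (g' k).
  by move=> k; rewrite /g'; case: ifP => _ //; move=> x; exact: cst_continuous.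
pose Phi (q1 q2 : sgmeasure R S) : 'rV[R]_(n + n) :=
  \row_(k < n + n) (sint q1 (f' k) + sint q2 (g' k)).
pose z := Phi v w.
pose H := [set y : 'rV[R]_(n + n) | exists s q1 q2, 0 <= s /\ hatP P q1 q2 /\ y = s *: Phi q1 q2].
have H0 : H 0.
  exists 0; do 2 eexists; split => //; split; [exact: kpP.1 | by rewrite scale0r].
have Hcone : forall y t, H y -> 0 <= t -> H (t *: y).
  move=> y t [s [q1 [q2 [s0 [hq ->]]]]] t0; exists (t * s), q1, q2.
  by split; [exact: mulr_ge0 | split => //; rewrite scalerA].
have Hconv : forall y1 y2 l, H y1 -> H y2 -> 0 <= l <= 1 -> H (l *: y1 + (1 - l) *: y2).
  move=> y1 y2 l [s1 [a1 [b1 [s10 [h1 ->]]]]] [s2 [a2 [b2 [s20 [h2 ->]]]]] /andP[l0 l1].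
  have p1 : 0 <= l * s1 by exact: mulr_ge0.
  have p2 : 0 <= (1 - l) * s2 by apply: mulr_ge0 => //; lra.
  pose s := l * s1 + (1 - l) * s2.
  have s0 : 0 <= s by rewrite /s; lra.
  case: (eqVneq s 0) => [s_eq0 | s_neq0].
    have e1 : l * s1 = 0 by move: s_eq0; rewrite /s; lra.
    have e2 : (1 - l) * s2 = 0 by move: s_eq0; rewrite /s; lra.
    exists 0, a1, b1; split => //; split => //.
    by rewrite scale0r !scalerA e1 e2 !scale0r addr0.
  have sp : 0 < s by rewrite lt0r s_neq0 s0.
  pose mu := l * s1 / s.
  have mu01 : 0 <= mu <= 1.
    apply/andP; split; first by rewrite /mu divr_ge0.
    by rewrite /mu ler_pdivrMr // mul1r /s; lra.
  exists s, (cadd (cscale mu a1) (cscale (1 - mu) a2)), (cadd (cscale mu b1) (cscale (1 - mu) b2)).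
  split => //; split; first exact: (thP.2 a1 b1 a2 b2 mu mu01 h1 h2).
  apply/rowP => k; rewrite /Phi !mxE.
  rewrite (sint_comb cS a1 a2 mu (f' k) mu01 (cf' k)) (sint_comb cS b1 b2 mu (g' k) mu01 (cg' k)).
  by rewrite /mu /s; field.
have PhiL : forall q1 q2 (i : 'I_n), Phi q1 q2 ord0 (lshift n i) = sint q1 (f i).
  by move=> q1 q2 i; rewrite /Phi mxE /f' /g' /= ltn_ord sint0 // addr0.
have PhiR : forall q1 q2 (i : 'I_n), Phi q1 q2 ord0 (rshift n i) = sint q2 (g i).
  by move=> q1 q2 i; rewrite /Phi mxE /f' /g' /= ltnNge leq_addr /= addKn sint0 // add0r.
have eps2 : 0 <= eps / 2 by rewrite divr_ge0 // ltW.
have key : forall (y : 'rV[R]_(n + n)) (i : 'I_n),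
    (eps / 2 <= `|y ord0 (lshift n i) - z ord0 (lshift n i)| \/
     eps / 2 <= `|y ord0 (rshift n i) - z ord0 (rshift n i)|) -> (eps / 2) ^+ 2 <= sqd z y.
  move=> y i [h|h]; apply: le_trans (sqd_term z y _); exact: (@sq_ge R _ _ eps2 h).
have Hgap : forall y, H y -> (eps / 2) ^+ 2 <= sqd z y.
  move=> y [s [q1 [q2 [s0 [hq ->]]]]].
  case: (eqVneq s 0) => [-> | sn0].
    case: P_nonempty => p0 Pp0.
    have [i ilt Hi] := Hfar 0 (lexx 0) p0 Pp0.
    apply: (key _ (Ordinal ilt)).
    rewrite /z !PhiL !PhiR scale0r !mxE !sub0r !normrN.
    rewrite !mul0r !sub0r !normrN in Hi.
    case: (lerP eps `|sint v (f i)|) => h1; first by left; lra.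
    case: (lerP eps `|sint w (g i)|) => h2; first by right; lra.
    by exfalso; apply: Hi.
  have sp : 0 < s by rewrite lt0r sn0 s0.
  case: hq => _ hq.
  have [t [t0 [p [Pp Hp]]]] := hq n f g cf cg (eps / (2 * s)) (ltac:(by rewrite divr_gt0 // mulr_gt0)).
  have [i ilt Hi] := Hfar (s * t) (mulr_ge0 (ltW sp) t0) p Pp.
  have [h1 h2] := Hp i ilt.
  apply: (key _ (Ordinal ilt)).
  rewrite ![(s *: Phi q1 q2) ord0 _]mxE /z !PhiL !PhiR.
  case: (lerP eps `|s * t * sint p.1 (f i) - sint v (f i)|) => h3.
    by left; exact: (@gap_aux R _ _ _ _ _ _ sp h1 h3).
  case: (lerP eps `|s * t * sint p.2 (g i) - sint w (g i)|) => h4.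
    by right; exact: (@gap_aux R _ _ _ _ _ _ sp h2 h4).
  by exfalso; apply: Hi.
have c0 : 0 < (eps / 2) ^+ 2 by rewrite exprn_gt0 // divr_gt0.
have [a [Ha Haz]] := @separation R (n + n) H z _ H0 Hcone Hconv c0 Hgap.
pose F := fun x => \sum_(k < n + n) a ord0 k * f' k x.
pose G := fun x => \sum_(k < n + n) a ord0 k * g' k x.
have cF : continuous F.
  apply: cont_sum => k x; apply: continuousM; [exact: cst_continuous | exact: cf'].
have cG : continuous G.
  apply: cont_sum => k x; apply: continuousM; [exact: cst_continuous | exact: cg'].
have dotPhi : forall q1 q2, dotv a (Phi q1 q2) = sint q1 F + sint q2 G.
  move=> q1 q2.
  rewrite /F /G (@sint_sum R S cS q1 _ (index_enum 'I_(n + n)) (fun k => a ord0 k) (fun k => f' k) (fun k => cf' k)).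
  rewrite (@sint_sum R S cS q2 _ (index_enum 'I_(n + n)) (fun k => a ord0 k) (fun k => g' k) (fun k => cg' k)).
  rewrite /dotv -big_split /=; apply: eq_bigr => k _.
  by rewrite /Phi mxE mulrDr.
have HP : forall dm q, P (dm, q) -> H (Phi dm q).
  move=> dm q Pq; exists 1, dm, q; split => //; split; last by rewrite scale1r.
  split; first exact: (thP.1 _ Pq).
  move=> n' f'' g'' _ _ e e0; exists 1; split => //; exists (dm, q); split => // i _.
  by rewrite !mul1r !subrr normr0.
have [MT HMT] := cont_bdd cS cT0.
have [MG HMG] := cont_bdd cS cG.
have MT0 : 0 < MT by apply: lt_le_trans (T0pos point) _; apply: le_trans (ler_norm _) (HMT point).
have MG0 : 0 <= MG by apply: le_trans (normr_ge0 _) (HMG point).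
pose dl := (MT * (MG + 1))^-1.
have dl0 : 0 < dl by rewrite /dl invr_gt0 mulr_gt0 //; lra.
have key2 : forall x, dl * G x < (T0 x)^-1.
  move=> x.
  have h1 : G x <= MG by apply: le_trans (ler_norm _) (HMG x).
  have h2 : dl * G x <= dl * MG by rewrite ler_wpM2l // ltW.
  have h3 : dl * (MG + 1) = MT^-1.
    by rewrite /dl invfM -mulrA mulVf ?mulr1 // gt_eqF //; lra.
  have h4 : dl * MG < MT^-1 by rewrite -h3 ltr_pM2l //; lra.
  have h5 : MT^-1 <= (T0 x)^-1.
    by rewrite lef_pV2 ?posrE //; apply: le_trans (ler_norm _) (HMT x).
  lra.
pose invT := fun x => (T0 x)^-1 - dl * G x.
have invT0 : forall x, 0 < invT x by move=> x; rewrite /invT subr_gt0.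
have cT0i : continuous (fun x => (T0 x)^-1).
  by move=> x; apply: continuousV; [rewrite gt_eqF | exact: cT0].
have cdG : continuous (fun x => (- dl) * G x).
  by move=> x; apply: (@continuousM R S (fun _ => - dl) G x); [exact: cst_continuous | exact: cG].
have cdF : continuous (fun x => dl * F x).
  by move=> x; apply: (@continuousM R S (fun _ => dl) F x); [exact: cst_continuous | exact: cF].
have cinvT : continuous invT.
  have -> : invT = (fun x => (T0 x)^-1 + (- dl) * G x).
    by apply/funext => x; rewrite /invT mulNr.
  by move=> x; apply: cvgD; [exact: cT0i | exact: cdG].
exists (fun x => eta0 x + dl * F x), (fun x => (invT x)^-1).
have sT : forall q, sint q (fun x => ((invT x)^-1)^-1) =
    sint q (fun x => (T0 x)^-1) - dl * sint q G.
  move=> q.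
  have -> : (fun x => ((invT x)^-1)^-1) = (fun x => (T0 x)^-1 + (- dl) * G x).
    by apply/funext => x; rewrite invrK /invT mulNr.
  rewrite (sint_add cS q _ _ cT0i cdG) (sint_scale cS q _ _ cG).
  by rewrite mulNr.
have sE : forall q, sint q (fun x => eta0 x + dl * F x) = sint q eta0 + dl * sint q F.
  by move=> q; rewrite (sint_add cS q _ _ ceta0 cdF) (sint_scale cS q _ _ cF).
split.
  split.
  - by move=> x; apply: cvgD; [exact: ceta0 | exact: cdF].
  - by move=> x; apply: continuousV; [rewrite gt_eqF | exact: cinvT].
  - by move=> x; rewrite invr_gt0.
  - move=> dm q Pq; rewrite sT sE.
    have h0 := Ha _ (HP dm q Pq); rewrite dotPhi in h0.
    have hcd := cdP dm q Pq.
    have := mulr_ge0 (ltW dl0) h0; rewrite mulrDr.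
    lra.
rewrite sT sE.
have := Haz; rewrite /z dotPhi => hz.
have : dl * (sint v F + sint w G) < 0 by rewrite pmulr_rlt0.
rewrite mulrDr.
lra.
Qed.
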